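(* For every pair of positive integers $g,k$, every graph $G_{g,k}$ obtained by the construction described in the context has a proper edge-colouring in which each cycle contains no colour exactly once.
   Context: Hypergraph notions. A closed walk of length $\ell$ in a hypergraph $H$ is a sequence $v_0F_0v_1F_1\ldots F_{\ell-1}v_0$ with $v_i,v_{i+1}\in F_i$ for all $0\le i<\ell$ (indices mod $\ell$), $F_i\ne F_{i+1}$ for all $i$ (indices mod $\ell$), and $v_1,\ldots,v_{\ell-1}$ pairwise distinct. An $r$-uniform hypergraph $H$ is tranquil, witnessed by labellings $\lambda=\{\lambda_F\}_{F\in E(H)}$ with $\lambda_F:F\to\{1,\dots,r\}$, if for every closed walk $W=v_0F_0\ldots F_{\ell-1}v_0$ the multigraph on $\{1,\dots,r\}$ with edge multiset $\{\lambda_{F_i}(v_i)\lambda_{F_i}(v_{i+1}):0\le i<\ell\}$ is bridgeless. The chromatic number of a hypergraph is the least number of colours in a vertex colouring with no monochromatic hyperedge; its girth is the length of a shortest Berge cycle (distinct hyperedges $F_1,\dots,F_\ell$ and distinct vertices $x_1,\dots,x_\ell$ with $x_i\in F_i\cap F_{i+1}$, indices mod $\ell$). Construction. Fix a positive integer $g$. $G_{g,1}$ is a single vertex. For $k\ge 2$, given a graph $G_{g,k-1}$ obtained by the construction, with vertex set identified with $\{1,\dots,r\}$, take a finite tranquil $r$-uniform hypergraph $H$ with chromatic number at least $k$ and girth at least $\lceil g/3\rceil$, together with tranquility-witnessing labellings $\lambda_F$, each $\lambda_F:F\to\{1,\dots,r\}$ a bijection. The graph $G_{g,k}$ consists of an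 independent set $T$ with a bijection $\nu:T\to V(H)$, together with, for each hyperedge $F\in E(H)$, a disjoint copy $G_F$ of $G_{g,k-1}$; for each $F\in E(H)$ one adds the perfect matching between $G_F$ and $\nu^{-1}(F)$ joining the vertex of $G_F$ corresponding to $i\in\{1,\dots,r\}$ to the vertex $t\in\nu^{-1}(F)$ with $\lambda_F(\nu(t))=i$. No other edges are present. A proper edge-colouring gives adjacent edges distinct colours; ''each cycle contains no colour exactly once'' means that for every cycle $C$ and every colour $c$, the number of edges of $C$ coloured $c$ is not $1$. *)

(* Defs.v *)
From HB Require Import structures.
From mathcomp Require Export all_boot.
Set Implicit Arguments. Unset Strict Implicit. Unset Printing Implicit Defensive.

(* A hypergraph: vertex finType V, hyperedge finType E, and he : E -> {set V}
   giving the vertex set of each hyperedge (required injective in the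
   construction, i.e. E(H) is a set of subsets of V). Indices of walks and
   cycles are taken modulo their length l. *)
Section Hyper.
Variables (V E : finType) (he : E -> {set V}).

Definition closed_walk (l : nat) (vs : nat -> V) (Fs : nat -> E) : Prop :=
  0 < l /\
  (forall i, i < l ->
     [/\ vs i \in he (Fs i), vs (i.+1 %% l) \in he (Fs i) & Fs i <> Fs (i.+1 %% l)]) /\
  (forall i j, 0 < i -> i < j -> j < l -> vs i <> vs j).

(* The multigraph on 'I_r with edges {A i, B i} (i < l) is bridgeless:
   no edge j is a bridge, i.e. its endpoints stay connected after deleting it
   (loops are never bridges). *)
Definition bridgeless_multigraph (r l : nat) (A B : nat -> 'I_r) : Prop :=
  forall j, j < l ->
    connect (fun a b : 'I_r => [exists i : 'I_l, (val i != j) &&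
               (((a == A i) && (b == B i)) || ((a == B i) && (b == A i)))])
            (A j) (B j).

(* tranquility witnessed by labellings lam F : F -> {1..r} (encoded as 'I_r) *)
Definition tranquil (r : nat) (lam : E -> V -> 'I_r) : Prop :=
  forall l vs Fs, closed_walk l vs Fs ->
    bridgeless_multigraph l (fun i => lam (Fs i) (vs i))
                            (fun i => lam (Fs i) (vs (i.+1 %% l))).

Definition uniform (r : nat) : Prop := forall F, #|he F| = r.

Definition monochromatic (m : nat) (c : V -> 'I_m) (F : E) : Prop :=
  forall x y, x \in he F -> y \in he F -> c x = c y.

Definition chromatic_ge (k : nat) : Prop :=
  forall m, m < k -> forall c : V -> 'I_m, exists F, monochromatic c F.

Definition berge_cycle (l : nat) (xs : nat -> V) (Fs : nat -> E) : Prop :=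
  2 <= l /\
  (forall i j, i < j -> j < l -> Fs i <> Fs j /\ xs i <> xs j) /\
  (forall i, i < l -> xs i \in he (Fs i) /\ xs i \in he (Fs (i.+1 %% l))).

Definition girth_ge (m : nat) : Prop :=
  forall l xs Fs, berge_cycle l xs Fs -> m <= l.

End Hyper.

(* vertices: inl t  (t in T, identified with V(H) via nu = id),
             inr (F, x) (vertex x of the copy G_F of G_{g,k-1}) *)
Definition gstep_rel (T0 : finType) (e0 : rel T0) (V E : finType)
  (he : E -> {set V}) (phi : T0 -> 'I_#|T0|) (lam : E -> V -> 'I_#|T0|)
  : rel (V + (E * T0)) :=
  fun a b => match a, b with
  | inl _, inl _ => false
  | inl t, inr (F, x) => (t \in he F) && (lam F t == phi x)
  | inr (F, x), inl t => (t \in he F) && (lam F t == phi x)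
  | inr (F, x), inr (F', y) => (F == F') && e0 x y
  end.

(* constructed g k T e : the graph (T, e) is (isomorphic to) a graph G_{g,k}
   obtained by the construction. *)
Inductive constructed (g : nat) : nat -> forall T : finType, rel T -> Prop :=
| constructed_base (T : finType) (e : rel T) :
    #|T| = 1 -> irreflexive e -> constructed g 1 e
| constructed_step (k : nat) (T0 : finType) (e0 : rel T0)
    (V E : finType) (he : E -> {set V})
    (phi : T0 -> 'I_#|T0|) (lam : E -> V -> 'I_#|T0|)
    (T : finType) (e : rel T) (f : T -> V + (E * T0)) :
    constructed g k e0 ->
    bijective phi ->                      (* V(G_{g,k-1}) identified with {1..r} *)
    injective he ->
    uniform he #|T0| ->
    chromatic_ge he k.+1 ->
    girth_ge he ((g + 2) %/ 3) ->         (* girth >= ceil(g/3) *)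
    tranquil he lam ->
    (forall F, {in he F &, injective (lam F)}) -> (* each lam_F a bijection *)
    bijective f ->
    (forall x y, e x y = gstep_rel e0 he phi lam (f x) (f y)) ->
    constructed g k.+1 e.

Section Colour.
Variables (T : finType) (e : rel T).

Definition proper_edge_colouring (c : T -> T -> nat) : Prop :=
  (forall x y, e x y -> c x y = c y x) /\
  (forall x y z, e x y -> e x z -> y != z -> c x y <> c x z).

Definition graph_cycle (l : nat) (xs : nat -> T) : Prop :=
  3 <= l /\
  (forall i j, i < j -> j < l -> xs i <> xs j) /\
  (forall i, i < l -> e (xs i) (xs (i.+1 %% l))).

Definition no_colour_exactly_once (c : T -> T -> nat) : Prop :=
  forall l xs, graph_cycle l xs -> forall col : nat,
    \sum_(i < l) (c (xs i) (xs (i.+1 %% l)) == col) <> 1.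

End Colour.

(* Main.v *)
Require Import Defs.
From mathcomp Require Import all_boot zify.
Set Implicit Arguments. Unset Strict Implicit. Unset Printing Implicit Defensive.

Lemma connect_homo (T1 T2 : finType) (R1 : rel T1) (R2 : rel T2) (h : T1 -> T2) :
  (forall a b, R1 a b -> connect R2 (h a) (h b)) ->
  forall x y, connect R1 x y -> connect R2 (h x) (h y).
Proof.
move=> H x y /connectP[p Hp ->]; elim: p x Hp => [|z p IH] x /=; first by [].
case/andP=> Hxz Hp; apply: connect_trans (H _ _ Hxz) (IH _ Hp).
Qed.

Lemma connect_closed_pred (T : finType) (R : rel T) (P : T -> Prop) :
  (forall a b, R a b -> P a -> P b) -> forall x y, connect R x y -> P x -> P y.
Proof.
move=> H x y /connectP[p Hp ->]; elim: p x Hp => [|z p IH] x /=; first by [].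
case/andP=> Hxz Hp Px; exact: IH _ Hp (H _ _ Hxz Px).
Qed.

Lemma connect_inv (T : finType) (A : Type) (R : rel T) (g : T -> A) :
  (forall a b, R a b -> g a = g b) -> forall x y, connect R x y -> g x = g y.
Proof.
move=> H x y C; apply: (@connect_closed_pred T R (fun z => g x = g z) _ x y C) => //.
by move=> a b /H -> .
Qed.

Definition good (T : finType) (e : rel T) (c : T -> T -> nat) :=
  [/\ symmetric e, proper_edge_colouring e c &
   forall x y, e x y -> ~~ connect (fun a b => e a b && (c a b != c x y)) x y].

Lemma good_ncceo (T : finType) (e : rel T) c : good e c -> no_colour_exactly_once e c.
Proof.
case=> sym [csym _] cut l xs [l3 [dist ed]] col Hs.
have [j Hj] : exists j : 'I_l, c (xs j) (xs (j.+1 %% l)) == col.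
  case: (pickP (fun j : 'I_l => c (xs j) (xs (j.+1 %% l)) == col)) => [j Hj|Hn];
    first by exists j.
  by move: Hs; rewrite big1 // => i _; rewrite Hn.
have Hoth : forall i, i < l -> i != j -> c (xs i) (xs (i.+1 %% l)) != col.
  move=> i il ij; move: Hs; rewrite (bigD1 j) //= Hj /= => /eqP.
  rewrite -[X in _ == X]addn0 eqn_add2l sum_nat_eq0 => /forallP H.
  have := H (Ordinal il); rewrite /= -(inj_eq val_inj) /= ij /= => /eqP.
  by case: (c _ _ == col).
set x := xs j; set y := xs (j.+1 %% l).
have exy : e x y by apply: ed.
set R := fun a b => e a b && (c a b != c x y).
have Rsym : symmetric R.
  move=> a b; rewrite /R sym; case eab: (e b a) => //=.
  by rewrite (csym _ _ eab).
have key : forall n, n < l -> connect R y (xs ((j.+1 + n) %% l)).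
  elim=> [|n IH] nl; first by rewrite addn0.
  apply: connect_trans (IH (ltnW nl)) _; apply: connect1.
  have il : (j.+1 + n) %% l < l by rewrite ltn_mod; lia.
  have Hne : (j.+1 + n) %% l != j.
    apply/negP=> /eqP E.
    have : (j.+1 + n) %% l = (j + l) %% l by rewrite E modnDr modn_small.
    move/eqP; rewrite addSnnS eqn_modDl => /eqP Hm.
    have : n.+1 %% l = 0 by rewrite Hm modnn.
    rewrite modn_small //; lia.
  have E1 : (j.+1 + n.+1) %% l = ((j.+1+n)%%l).+1 %% l.
    by rewrite -[(_ %% l).+1]addn1 modnDml addn1 addnS.
  by rewrite E1 /R (eqP Hj) ed // Hoth.
have l1 : l.-1 < l by lia.
have := key l.-1 l1; rewrite addSnnS prednK; last by lia.
rewrite modnDr modn_small // => C.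
by move: (cut x y exy); rewrite (sym_connect_sym Rsym) C.
Qed.

Section Aux.
Variables (T0 : finType) (V E : finType) (he : E -> {set V})
  (phi : T0 -> 'I_#|T0|) (phiinv : 'I_#|T0| -> T0) (lam : E -> V -> 'I_#|T0|).
Hypotheses (phiK : cancel phi phiinv) (tr : tranquil he lam).
Variable cls : T0 -> T0.

Definition adj (t : V) (G : E) (z : T0) := (t \in he G) && (cls (phiinv (lam G t)) == z).

Definition auxA : rel (V + (E * T0)) := fun u v =>
  match u, v with
  | inl t, inr (G, z) => adj t G z
  | inr (G, z), inl t => adj t G z
  | _, _ => false
  end.

Definition isr (u : V + (E * T0)) := if u is inr _ then true else false.

Lemma adj_uniq t G z z' : adj t G z -> adj t G z' -> z = z'.
Proof. by case/andP=> _ /eqP <- /andP[_ /eqP <-]. Qed.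

Lemma aux_noconn F rx ry : rx != ry -> ~~ connect auxA (inr (F, rx)) (inr (F, ry)).
Proof.
move=> rxy; apply/negP => /connectP [p0 Hp0 Hl].
case: (shortenP Hp0) Hl => p Hp Hu _ Hl.
set s : V + (E * T0) := inr (F, rx).
set q := s :: p.
set n := size p.
have step : forall i, i < n -> auxA (nth s q i) (nth s q i.+1).
  by move=> i lin; have /pathP := Hp; apply.
have par : forall i, i <= n -> isr (nth s q i) = ~~ odd i.
  elim=> [|i IH] lin; first by [].
  suff -> : isr (nth s q i.+1) = ~~ isr (nth s q i) by rewrite IH ?negbK // ltnW.
  have := step i lin.
  by case: (nth s q i) => [t|[G z]]; case: (nth s q i.+1) => [t'|[G' z']].
have qn : nth s q n = inr (F, ry).
  by rewrite Hl /q /n -[size p]/((size (s :: p)).-1) nth_last.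
have oddn : ~~ odd n by have := par n (leqnn n); rewrite qn.
set m := n./2.
have nm : n = 2 * m by move: (odd_double_half n); rewrite (negbTE oddn) -mul2n.
have m0 : 0 < m.
  case: (posnP m) => // m00.
  have : size p == 0 by rewrite -/n nm m00.
  rewrite size_eq0 => /eqP pe; move: Hl; rewrite pe /= => -[] E0.
  by move: rxy; rewrite E0 eqxx.
have uq : forall i j, i <= n -> j <= n -> nth s q i = nth s q j -> i = j.
  move=> i j il jl E0; apply/eqP; rewrite -(nth_uniq s _ _ Hu) ?E0 //=; lia.
have [t0 Ht0] : exists t0, nth s q 1 = inl t0.
  have := par 1 ltac:(lia); case: (nth s q 1) => [t|//]; by exists t.
pose gl (u : V + (E * T0)) := if u is inl t then t else t0.
pose gr (u : V + (E * T0)) := if u is inr z then z else (F, rx).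
pose vs i := gl (nth s q (2 * i).+1).
pose Fs i := (gr (nth s q (2 * i).+2)).1.
pose zs i := (gr (nth s q (2 * i).+2)).2.
have Q1 : forall i, i < m -> nth s q (2 * i).+1 = inl (vs i).
  move=> i im; have := par (2 * i).+1 ltac:(lia); rewrite /vs.
  have -> : odd (2 * i).+1 by rewrite /= oddM.
  by case: (nth s q _).
have Q2 : forall i, i < m -> nth s q (2 * i).+2 = inr (Fs i, zs i).
  move=> i im; have := par (2 * i).+2 ltac:(lia); rewrite /Fs /zs.
  have -> : odd (2 * i).+2 = false by rewrite /= oddM.
  by case: (nth s q _) => // -[].
have Fm : Fs m.-1 = F /\ zs m.-1 = ry.
  have := Q2 m.-1 ltac:(lia); have -> : (2 * m.-1).+2 = n by lia.
  by rewrite qn => -[-> ->].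
have A1 : forall i, i < m -> adj (vs i) (Fs i) (zs i).
  move=> i im; have := step (2 * i).+1 ltac:(lia); by rewrite Q1 // Q2.
have A2 : forall i, i.+1 < m -> adj (vs i.+1) (Fs i) (zs i).
  move=> i im; have := step (2 * i).+2 ltac:(lia).
  have -> : (2 * i).+3 = (2 * i.+1).+1 by lia.
  by rewrite Q2 ?Q1 //; lia.
have A0 : adj (vs 0) F rx.
  by have := step 0 ltac:(lia); rewrite -[1]/((2 * 0).+1) Q1.
have CW : closed_walk he m vs Fs.
  split=> //; split.
  - move=> i im; have /andP[H1 _] := A1 i im.
    case: (ltnP i.+1 m) => im'.
    + rewrite modn_small //; split=> //.
      * by case/andP: (A2 i im').
      * move=> EF; have := A2 i im'; rewrite EF => /adj_uniq /(_ (A1 _ im')) Ez.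
        have := uq (2 * i).+2 (2 * i.+1).+2 ltac:(lia) ltac:(lia).
        by rewrite Q2 // Q2 // EF Ez => /(_ erefl); lia.
    + have im1 : i = m.-1 by lia.
      have -> : i.+1 %% m = 0 by rewrite im1 prednK // modnn.
      rewrite im1 (proj1 Fm); split.
      * by rewrite -(proj1 Fm); apply: (proj1 (andP (A1 _ _))); lia.
      * by case/andP: A0.
      * move=> EF; have := A1 0 m0; rewrite -EF => /adj_uniq /(_ A0) Ez.
        have := uq 0 2 ltac:(lia) ltac:(lia).
        by rewrite -[2]/((2 * 0).+2) Q2 // -EF Ez => /(_ erefl).
  - move=> i j i0 ij jm Ev.
    have := uq (2 * i).+1 (2 * j).+1 ltac:(lia) ltac:(lia).
    by rewrite !Q1 ?Ev //; try lia; move=> /(_ erefl); lia.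
have m1 : m.-1 < m by lia.
have := tr CW m1.
pose cl (a : 'I_#|T0|) := cls (phiinv a).
have clA : forall i, i < m -> cl (lam (Fs i) (vs i)) = zs i.
  by move=> i im; case/andP: (A1 i im) => _ /eqP.
move/(connect_inv (g := cl)).
have -> : m.-1.+1 %% m = 0 by rewrite prednK // modnn.
rewrite clA; last by rewrite prednK.
rewrite (proj2 Fm) (proj1 Fm).
have -> : cl (lam F (vs 0)) = rx by case/andP: A0 => _ /eqP.
move=> H; move: rxy; rewrite H ?eqxx //.
move=> a b /existsP [i /andP [ni Hab]].
case: i ni Hab => i li /= ni Hab.
have im : i.+1 < m by move/eqP: ni; lia.
have E1 : cl (lam (Fs i) (vs i)) = zs i by apply: clA; lia.
have E2 : cl (lam (Fs i) (vs (i.+1 %% m))) = zs i.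
  by rewrite modn_small //; case/andP: (A2 i im) => _ /eqP.
by case/orP: Hab => /andP [/eqP -> /eqP ->]; rewrite E1 E2.
Qed.

End Aux.

Section Step.
Variables (T0 : finType) (e0 : rel T0) (c0 : T0 -> T0 -> nat) (V E : finType)
  (he : E -> {set V}) (phi : T0 -> 'I_#|T0|) (phiinv : 'I_#|T0| -> T0)
  (lam : E -> V -> 'I_#|T0|).
Hypotheses (G0 : good e0 c0) (phiK : cancel phi phiinv) (phiinvK : cancel phiinv phi)
  (laminj : forall F, {in he F &, injective (lam F)}) (tr : tranquil he lam).

Let U := (V + (E * T0))%type.
Let e' := gstep_rel e0 he phi lam.

Definition cc (a b : V + (E * T0)) : nat :=
  match a, b with
  | inr (F, x), inr (_, y) => (c0 x y).*2
  | inl _, inr (F, _) => (enum_rank F).*2.+1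
  | inr (F, _), inl _ => (enum_rank F).*2.+1
  | _, _ => 0
  end.

Lemma step_good : good e' cc.
Proof.
case: G0 => sym0 [csym0 prop0] cut0.
have phiI : injective phi := can_inj phiK.
have sym' : symmetric e'.
  by move=> [t|[F x]] [t'|[F' y]] //=; rewrite eq_sym sym0.
have csym' : forall x y, e' x y -> cc x y = cc y x.
  move=> [t|[F x]] [t'|[F' y]] //= /andP [_ exy].
  by rewrite csym0.
split=> //; first split=> //.
- move=> [t|[F x]] [t'|[F' y]] [t''|[F'' z]] //=.
  + move=> /andP [tF /eqP ly] /andP [tF' /eqP lz] neq E1.
    have EF : F' = F''.
      by apply: enum_rank_inj; apply: val_inj; apply: double_inj; case: E1.
    move: lz tF'; rewrite -EF => lz tF'.
    by move: neq; rewrite -(phiI _ _ (etrans (esym ly) lz)) EF eqxx.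
  + move=> /andP [tF /eqP ly] /andP [tF' /eqP lz] neq _.
    by move: neq; rewrite (laminj tF tF' (etrans ly (esym lz))) eqxx.
  + by move=> _ _ _; rewrite -!mul2n; lia.
  + by move=> _ _ _; rewrite -!mul2n; lia.
  + move=> /andP [/eqP EF exy] /andP [/eqP EF' exz] neq /double_inj.
    apply: prop0 exy exz _; apply: contra neq => /eqP ->.
    by rewrite -EF -EF'.
- have Rsym : forall col, symmetric (fun a b => e' a b && (cc a b != col)).
    move=> col a b; rewrite sym'; case eba: (e' b a) => //=.
    by rewrite (csym' _ _ eba).
  have match_case : forall F x t,
      ~~ connect (fun a b => e' a b && (cc a b != (enum_rank F).*2.+1))
                 (inr (F, x)) (inl t).
    move=> F x t; apply/negP => C.
    have := @connect_closed_pred _ _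
      (fun w => if w is inr (G, _) then G = F else False) _ _ _ C erefl.
    apply.
    move=> [a|[G a]] [b|[G' b]] //=.
    * by move=> /andP [_ ] ; move=> H EG; move: H; rewrite EG eqxx.
    * by move=> /andP [/andP [/eqP -> _] _] ->.
  move=> [t|[F x]] [t'|[F' y]] //=.
  + move=> H; rewrite (sym_connect_sym (Rsym _)).
    exact: match_case.
  + move=> /andP [/eqP EF exy]; subst F'.
    set d := c0 x y.
    pose K := fun a b => e0 a b && (c0 a b != d).
    have Ksym : symmetric K.
      move=> a b; rewrite /K sym0; case eba: (e0 b a) => //=.
      by rewrite (csym0 _ _ eba).
    have nK : ~~ connect K x y by apply: cut0.
    pose cls := root K.
    have clsne : cls x != cls y by rewrite /cls (root_connect (sym_connect_sym Ksym)).
    apply/negP => C.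
    have := aux_noconn phiinv tr cls F clsne; rewrite /negb.
    suff -> : connect (auxA he phiinv lam cls) (inr (F, cls x)) (inr (F, cls y)) by [].
    pose h (u : V + (E * T0)) : V + (E * T0) :=
      if u is inr (G, z) then inr (G, cls z) else u.
    apply: (connect_homo (h := h) _ C).
    move=> [a|[G a]] [b|[G' b]] //=.
    * move=> /andP [/andP [aG /eqP lb] _]; apply: connect1.
      by rewrite /= /adj aG lb phiK eqxx.
    * move=> /andP [/andP [aG /eqP lb] _]; apply: connect1.
      by rewrite /= /adj aG lb phiK eqxx.
    * move=> /andP [/andP [/eqP <- eab]]; rewrite eqn_leq -!mul2n => Hd.
      have Kab : K a b by rewrite /K eab /=; apply/eqP => Ed; move: Hd; rewrite Ed; lia.
      have : cls a = cls b by apply/eqP; rewrite /cls (root_connect (sym_connect_sym Ksym)) connect1.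
      by move=> ->.
Qed.

End Step.

Lemma good_transport (T U : finType) (e : rel T) (e' : rel U) (f : T -> U) c' :
  injective f -> (forall x y, e x y = e' (f x) (f y)) -> good e' c' ->
  good e (fun x y => c' (f x) (f y)).
Proof.
move=> finj He [sym' [csym' prop'] cut']; split.
- by move=> x y; rewrite !He sym'.
- split.
  + by move=> x y; rewrite He => /csym'.
  + move=> x y z; rewrite !He => exy exz neq; apply: prop' exy exz _.
    by rewrite (inj_eq finj).
- move=> x y exy; apply/negP => C; move: (cut' _ _ (etrans (esym (He x y)) exy)).
  rewrite /negb (connect_homo (h := f) _ C) // => a b /andP [eab ne].
  by apply: connect1; rewrite -He eab.
Qed.

Lemma good_base (T : finType) (e : rel T) :
  #|T| = 1 -> irreflexive e -> good e (fun _ _ => 0).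
Proof.
move=> c1 irr.
have eq : forall x y : T, x = y.
  move=> x y; have /fintype_le1P H : #|T| <= 1 by rewrite c1.
  by rewrite (H x) (H y).
have ef : forall x y, e x y = false by move=> x y; rewrite (eq x y) irr.
split.
- by move=> x y; rewrite !ef.
- by split=> x y; rewrite ef.
- by move=> x y; rewrite ef.
Qed.

Theorem lemma4p1 (g k : nat) (T : finType) (e : rel T) :
  0 < g -> 0 < k -> constructed g k e ->
  exists c : T -> T -> nat,
    proper_edge_colouring e c /\ no_colour_exactly_once e c.
Proof.
move=> _ _ C.
suff [c Gc] : exists c, good e c.
  by exists c; split; [case: Gc | apply: good_ncceo].
elim: C => {k T e}.
- move=> T e c1 irr; exists (fun _ _ => 0); exact: good_base.
- move=> k T0 e0 V E he phi lam T e f _ [c0 G0] [phiinv phiK phiinvK] _ _ _ _ tr linj [finv fK _] He.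
  exists (fun x y => cc c0 (f x) (f y)).
  apply: good_transport (can_inj fK) He _.
  by apply: step_good.
Qed.
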